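(* For all real $D,R\ge2$, \[ \#\mathcal E(D,R)\ll\frac{D^2R(\log R)^2}{\log D}, \] with an absolute implied constant.
   Context: For $\lambda\in\mathbb F_p^*$, $\rho(\lambda,p)=\min\{rs: r,s\text{ positive integers},\ r\equiv\lambda s\pmod p\}$. For real $D,R\ge2$, $\mathcal E(D,R)$ is the set of primes $p$ for which there exists $\lambda\in\mathbb F_p^*$ of multiplicative order $d$ with $3\le d<D$ and $\rho(\lambda,p)<R$. *)

(* Defs.v *)
From mathcomp Require Import all_boot.
From Stdlib Require Import Reals.

Definition mult_order (lam p d : nat) : Prop :=
  (0 < d)%N /\ (lam ^ d = 1 %[mod p])%N /\
  (forall k, (0 < k)%N -> (k < d)%N -> (lam ^ k <> 1 %[mod p])%N).

Definition rho_admissible (lam p m : nat) : Prop :=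
  exists r s, (0 < r)%N /\ (0 < s)%N /\ (r = lam * s %[mod p])%N /\ m = (r * s)%N.

Definition is_rho (lam p m : nat) : Prop :=
  rho_admissible lam p m /\ (forall m', rho_admissible lam p m' -> (m <= m')%N).

Definition in_E (D R : R) (p : nat) : Prop :=
  prime p /\
  exists lam d, (0 < lam)%N /\ (lam < p)%N /\ mult_order lam p d /\
    (3 <= d)%N /\ (INR d < D)%R /\
    exists m, is_rho lam p m /\ (INR m < R)%R.

(* Main.v *)
Require Import Defs.
From mathcomp Require Import all_boot.
From Stdlib Require Import Reals.
From mathcomp Require Import zify.
From Stdlib Require Import Lia Lra Psatz ClassicalEpsilon ZArith.
Lemma powE (a b : nat) : Nat.pow a b = expn a b.
Proof. elim: b => [|b IH] //=; by rewrite expnS IH multE. Qed.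
Lemma cancel_mod p a x y : prime p -> (0 < a < p)%nat ->
  (a * x = a * y %[mod p])%nat -> (x = y %[mod p])%nat.
Proof.
move=> pp /andP[a0 ap].
wlog le: x y / (y <= x)%nat.
  move=> H E; case: (leqP y x) => h; first exact: H.
  by symmetry; apply: H (ltnW h) _.
move=> E; apply/eqP; rewrite eqn_mod_dvd //.
have: (p %| a * x - a * y)%nat by rewrite -eqn_mod_dvd ?leq_mul2l ?le ?orbT //; apply/eqP.
rewrite -mulnBr Euclid_dvdM // => /orP[|//].
by move=> /(dvdn_leq a0); rewrite leqNgt ap.
Qed.
Lemma order_lt lam p d : prime p -> (0 < lam < p)%nat -> mult_order lam p d -> (d < p)%nat.
Proof.
move=> pp hl [d0 [hd hmin]].
have p1 := prime_gt1 pp.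
have F : (Nat.pow lam p.-1 = 1 %[mod p])%nat.
  rewrite powE.
  apply: (@cancel_mod p lam) => //; rewrite muln1; have -> : (lam * expn lam p.-1 = expn lam p)%nat by rewrite -expnS prednK //; lia.
  exact: fermat_little.
case: (leqP d p.-1) => h; first lia.
exfalso; apply: (hmin p.-1) => //; lia.
Qed.
Lemma primes_size_bound d l : forall n, (0 < n)%nat -> uniq l ->
  (forall q, q \in l -> [&& prime q, q %| n & d < q]%nat) -> (expn (d.+1) (size l) <= n)%nat.
Proof.
elim: l => [|p l IH] n n0 /=; first by rewrite expn0.
move=> /andP[pl ul] H.
have /and3P[pp pn dp] := H p (mem_head _ _).
have e : n = p * (n %/ p) by rewrite mulnC divnK.
have n'0 : (0 < n %/ p)%nat by rewrite divn_gt0 ?prime_gt0 // dvdn_leq.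
have IH' := IH (n %/ p) n'0 ul.
rewrite expnS [X in (_ <= X)%nat]e leq_mul //; apply: IH' => q ql.
have /and3P[qp qn dq] := H q ltac:(by rewrite inE ql orbT).
rewrite qp dq andbT /=.
move: qn; rewrite [X in (_ %| X)%nat -> _]e Euclid_dvdM // => /orP[|//].
move=> /(prime_nt_dvdP pp) qe. have : q = p by apply: qe; rewrite neq_ltn prime_gt1 ?orbT.
move=> qpe; by rewrite -qpe ql in pl.
Qed.

Open Scope R_scope.

Lemma INR_expn (a b : nat) : INR (expn a b) = (INR a ^ b)%R.
Proof. by rewrite -powE pow_INR. Qed.
Lemma INR_muln (a b : nat) : INR (muln a b) = INR a * INR b.
Proof. by rewrite -multE mult_INR. Qed.
Lemma INR_addn (a b : nat) : INR (addn a b) = INR a + INR b.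
Proof. by rewrite -plusE plus_INR. Qed.
Lemma INR_leq (a b : nat) : (a <= b)%nat -> INR a <= INR b.
Proof. by move=> /leP; apply: le_INR. Qed.

Lemma ln_le' x y : 0 < x -> x <= y -> ln x <= ln y.
Proof.
move=> x0 [h|->]; last by right.
by left; apply: ln_increasing.
Qed.

Lemma ln_sub1 z : 0 < z -> ln z <= z - 1.
Proof. move=> z0; have := exp_ineq1_le (ln z); rewrite exp_ln //; lra. Qed.

Lemma ln3 : 1 <= ln 3.
Proof. rewrite -(ln_exp 1); apply: ln_le'; [apply: exp_pos| apply: exp_le_3]. Qed.

Lemma ln_quot x y : 0 < x -> 0 < y -> ln (y / x) = ln y - ln x.
Proof.
move=> x0 y0; have xi : 0 < / x by apply: Rinv_0_lt_compat.
rewrite /Rdiv ln_mult // ln_Rinv //; lra.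
Qed.

Lemma xlny x y : 3 <= x -> x <= y -> x * ln y <= y * ln x.
Proof.
move=> x3 xy.
have x0 : 0 < x by lra.
have y0 : 0 < y by lra.
have h := ln_sub1 (y / x) ltac:(apply: Rdiv_lt_0_compat; lra).
rewrite ln_quot // in h.
have h1 : x * (ln y - ln x) <= y - x.
  have -> : y - x = x * (y / x - 1) by field; lra.
  by apply: Rmult_le_compat_l; lra.
have h2 : 1 <= ln x by apply: Rle_trans ln3 (ln_le' _ _ _ x3); lra.
nra.
Qed.

Lemma harm (K n : nat) : (1 <= n)%nat ->
  INR (sumn [seq K %/ r | r <- iota 1 n]) <= INR K * (1 + ln (INR n)).
Proof.
elim: n => [//|n IH] _.
have K0 := pos_INR K.
case: n IH => [|n] IH.
  rewrite /= divn1 addn0 ln_1; lra.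
have -> : iota 1 n.+2 = iota 1 n.+1 ++ [:: n.+2] by have := iotaD 1 n.+1 1; rewrite addn1.
rewrite map_cat sumn_cat.
have -> : sumn [seq K %/ r | r <- [:: n.+2]] = (K %/ n.+2)%nat by rewrite /= addn0.
rewrite INR_addn.
have IH' := IH isT.
set a := INR n.+1.
have a0 : 0 < a by apply: lt_0_INR; lia.
have ea : INR n.+2 = a + 1 by rewrite S_INR.
rewrite ea.
have hb : INR (K %/ n.+2) <= INR K / (a + 1).
  apply: (Rmult_le_reg_r (a + 1)); first lra.
  rewrite /Rdiv Rmult_assoc Rinv_l ?Rmult_1_r; last lra.
  have := INR_leq _ _ (leq_divM K n.+2).
  by rewrite INR_muln ea.
have hl : ln a + / (a + 1) <= ln (a + 1).
  have h := ln_sub1 (a / (a + 1)) ltac:(apply: Rdiv_lt_0_compat; lra).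
  rewrite ln_quot in h; try lra.
  have : a / (a + 1) - 1 = - / (a + 1) by field; lra.
  lra.
have h3 : INR K * / (a+1) <= INR K * (ln (a+1) - ln a) by apply: Rmult_le_compat_l; lra.
rewrite /Rdiv in hb.
change (INR n.+1) with a in IH'. clearbody a.
lra.
Qed.

Lemma floor_nat x : 0 <= x -> exists K : nat, INR K <= x /\ forall n : nat, INR n < x -> (n <= K)%nat.
Proof.
move=> x0; have [h1 h2] := archimed x.
set z := up x in h1 h2.
have z0 : (0 < z)%Z by apply: lt_IZR; lra.
exists (Z.to_nat (z - 1)); split.
  rewrite INR_IZR_INZ Z2Nat.id; last lia.
  rewrite minus_IZR /=; lra.
move=> n hn.
have : (Z.of_nat n < z)%Z by apply: lt_IZR; rewrite -INR_IZR_INZ; lra.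
lia.
Qed.

Lemma sumn_bound (X : eqType) (T : seq X) (g : X -> nat) c :
  (forall t, t \in T -> INR (g t) <= c) -> INR (sumn [seq g t | t <- T]) <= INR (size T) * c.
Proof.
elim: T => [|x T IH] H; first by rewrite /= Rmult_0_l; right.
rewrite map_cons.
have -> : sumn (g x :: [seq g t | t <- T]) = (g x + sumn [seq g t | t <- T])%nat by [].
have -> : size (x :: T) = (size T).+1 by [].
rewrite INR_addn S_INR.
have h1 := H x (mem_head _ _).
have h2 := IH (fun t ht => H t ltac:(by rewrite inE ht orbT)).
lra.
Qed.

Definition Pt (t : nat * (nat * nat)) : seq nat :=
  let: (d, (r, s)) := t in
  [seq q <- primes (expn r d - expn s d + (expn s d - expn r d)) | (d < q)%nat].

Lemma claim1 D Rr K Dk p :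
  (forall n : nat, INR n < Rr -> (n <= K)%nat) ->
  (forall n : nat, INR n < D -> (n <= Dk)%nat) ->
  in_E D Rr p ->
  p \in flatten [seq Pt t | t <- [seq (d, rs) | d <- iota 3 (Dk - 2),
                 rs <- [seq (r, s) | r <- iota 1 K, s <- iota 1 (K %/ r)]]].
Proof.
move=> HK HD [pp [lam [d [l0 [lp [ord [d3 [dD [m [[[r [s [r0 [s0 [rl ms]]]] mmin] mR]]]]]]]]]]].
have mlam : (m <= lam)%nat.
  by apply: mmin; exists lam, 1%nat; rewrite muln1.
have dp := @order_lt lam p d pp ltac:(by rewrite l0 lp) ord.
have mK := HK m mR.
have dK := HD d dD.
have rm : (r <= m)%nat by rewrite ms leq_pmulr.
have sm : (s <= m)%nat by rewrite ms leq_pmull.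
have rs_ne : r <> s.
  move=> e; subst s.
  have : (1 = lam %[mod p])%nat.
    apply: (@cancel_mod p r) => //; first by apply/andP; split => //; lia.
    by rewrite muln1 mulnC.
  move=> e1; have [_ [_ hmin]] := ord.
  apply: (hmin 1%nat); [done | lia | by rewrite powE expn1 -e1].
have hdiv : (expn r d = expn s d %[mod p])%nat.
  have [_ [h1 _]] := ord; rewrite powE in h1.
  by rewrite -modnXm rl modnXm expnMn -modnMml h1 modnMml mul1n.
have d0 : (0 < d)%nat by lia.
apply/flatten_mapP; exists (d, (r, s)).
  apply/allpairsP; exists (d, (r, s)); split => //=.
    rewrite mem_iota; lia.
  apply/allpairsPdep; exists r, s; split => //.
    rewrite mem_iota; lia.
  have : (s <= K %/ r)%nat by rewrite leq_divRL; [rewrite mulnC -ms | lia].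
  rewrite mem_iota; lia.
rewrite /Pt mem_filter dp /= mem_primes pp /=.
have ne : expn r d != expn s d by rewrite eqn_exp2r //; apply/eqP.
case: (leqP (expn s d) (expn r d)) => h.
  have -> : (expn s d - expn r d = 0)%nat by apply/eqP; rewrite subn_eq0; lia.
  rewrite addn0 -eqn_mod_dvd // hdiv eqxx andbT.
  lia.
have -> : (expn r d - expn s d = 0)%nat by apply/eqP; rewrite subn_eq0; lia.
rewrite add0n -eqn_mod_dvd; last lia.
rewrite hdiv eqxx andbT; lia.
Qed.

Lemma ln_pos2 x : 2 <= x -> / 2 < ln x.
Proof.
move=> hx; apply: Rlt_le_trans ln_lt_2 _; apply: ln_le'; lra.
Qed.

Lemma term_bound D Rr K Dk t : 2 <= D -> 2 <= Rr -> INR K <= Rr -> INR Dk <= D ->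
  t \in [seq (d, rs) | d <- iota 3 (Dk - 2),
                 rs <- [seq (r, s) | r <- iota 1 K, s <- iota 1 (K %/ r)]] ->
  INR (size (Pt t)) <= D * ln Rr / ln D.
Proof.
move=> HD HR HK HDk /allpairsP [[d rs] [/= hd hrs ->]].
move: hrs => /allpairsPdep [r [s [hr hs ->]]].
rewrite mem_iota in hd; rewrite mem_iota in hr; rewrite mem_iota in hs.
have lD := ln_pos2 _ HD; have lR := ln_pos2 _ HR.
have c0 : 0 <= D * ln Rr / ln D.
  apply: Rmult_le_pos; [apply: Rmult_le_pos; lra | left; apply: Rinv_0_lt_compat; lra].
rewrite /Pt.
set N := (expn r d - expn s d + (expn s d - expn r d))%nat.
have d0 : (0 < d)%nat by lia.
have [hN|hN] := posnP N.
  by rewrite hN.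
set l := [seq q <- primes N | (d < q)%nat].
have hk := @primes_size_bound d l N hN (filter_uniq _ (primes_uniq N))
  ltac:(by move=> q; rewrite mem_filter mem_primes => /andP[-> /and3P[-> _ ->]]).
have r1 : (r <= K)%nat by lia.
have sr : (s <= K %/ r)%nat by lia.
have s1 : (s <= K)%nat.
  apply: leq_trans sr _; apply: leq_div.
have K0 : (0 < K)%nat by lia.
have hNK : (N <= expn K d)%nat.
  have a1 : (expn r d <= expn K d)%nat by rewrite leq_exp2r.
  have a2 : (expn s d <= expn K d)%nat by rewrite leq_exp2r.
  rewrite /N; lia.
have hr1 := INR_leq _ _ (leq_trans hk hNK).
rewrite !INR_expn in hr1.
set k := size l in hr1 *.
have Kp : 0 < INR K by apply: lt_0_INR; lia.
have dp : 3 <= INR d by have := INR_leq 3 d ltac:(lia); rewrite /=; lra.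
have d1 : INR d.+1 = INR d + 1 by rewrite S_INR.
have h1 : INR k * ln (INR d.+1) <= INR d * ln (INR K).
  rewrite -!ln_pow //; last by lra.
  apply: ln_le' => //; apply: pow_lt; lra.
have h2 : ln (INR K) <= ln Rr by apply: ln_le'.
have h3 : ln (INR d) <= ln (INR d.+1) by apply: ln_le'; lra.
have dDk : INR d <= D by apply: Rle_trans HDk; apply: INR_leq; lia.
have h4 := xlny _ _ dp dDk.
have ld : 1 <= ln (INR d) by apply: Rle_trans ln3 (ln_le' _ _ _ dp); lra.
have k0 := pos_INR k.
have d00 : 0 <= INR d by lra.
have h5 : INR k * ln (INR d) <= INR d * ln Rr.
  apply: Rle_trans (_ : INR k * ln (INR d.+1) <= _).
    by apply: Rmult_le_compat_l.
  apply: Rle_trans h1 _; apply: Rmult_le_compat_l => //.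
have h6 : INR k * ln D <= D * ln Rr.
  apply: (Rmult_le_reg_l (ln (INR d))); first lra.
  have e1 : ln (INR d) * (INR k * ln D) = (INR k * ln (INR d)) * ln D by ring.
  have e2 : ln (INR d) * (D * ln Rr) = (D * ln (INR d)) * ln Rr by ring.
  rewrite e1 e2.
  apply: Rle_trans (_ : (INR d * ln Rr) * ln D <= _).
    apply: Rmult_le_compat_r; lra.
  have e3 : INR d * ln Rr * ln D = (INR d * ln D) * ln Rr by ring.
  rewrite e3; apply: Rmult_le_compat_r; lra.
apply: (Rmult_le_reg_r (ln D)); first lra.
rewrite /Rdiv Rmult_assoc Rinv_l ?Rmult_1_r //; lra.
Qed.

Theorem lemma4p5 :
  exists C : R, forall D Rr : R, (2 <= D)%R -> (2 <= Rr)%R ->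
    exists s : seq nat, uniq s /\ (forall p, in_E D Rr p <-> p \in s) /\
      (INR (size s) <= C * (D ^ 2 * Rr * (ln Rr) ^ 2 / ln D))%R.
Proof.
exists 3; move=> D Rr HD HR.
have [K [HK1 HK2]] := floor_nat Rr ltac:(lra).
have [Dk [HD1 HD2]] := floor_nat D ltac:(lra).
pose pairs := [seq (r, s) | r <- iota 1 K, s <- iota 1 (K %/ r)].
pose T := [seq (d, rs) | d <- iota 3 (Dk - 2), rs <- pairs].
pose L := flatten [seq Pt t | t <- T].
pose dec := fun p => if excluded_middle_informative (in_E D Rr p) then true else false.
have decP : forall p, dec p = true <-> in_E D Rr p.
  move=> p; rewrite /dec; case: excluded_middle_informative => //.
have c1 : forall p, in_E D Rr p -> p \in L by move=> p; apply: claim1.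
exists (undup [seq p <- L | dec p]).
split; first exact: undup_uniq.
split.
  move=> p; rewrite mem_undup mem_filter; split => [h|/andP[h _]].
    by rewrite (proj2 (decP p) h) c1.
  by apply/decP.
have lD := ln_pos2 _ HD; have lR := ln_pos2 _ HR.
have K1 : (1 <= K)%nat by apply: HK2; rewrite /=; lra.
set c := D * ln Rr / ln D.
have c0 : 0 <= c.
  apply: Rmult_le_pos; [apply: Rmult_le_pos; lra | left; apply: Rinv_0_lt_compat; lra].
have s1 : INR (size (undup [seq p <- L | dec p])) <= INR (size L).
  apply: INR_leq; apply: leq_trans (size_undup _) _.
  by rewrite size_filter count_size.
have s2 : INR (size L) <= INR (size T) * c.
  rewrite /L size_flatten /shape -map_comp.
  apply: sumn_bound => t ht.
  exact: (@term_bound D Rr K Dk t HD HR HK1 HD1 ht).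
have sT : size T = ((Dk - 2) * sumn [seq K %/ r | r <- iota 1 K])%nat.
  rewrite /T size_allpairs /pairs size_allpairs_dep.
  congr (_ * sumn _)%nat; first exact: size_iota.
  elim: (iota 1 K) => //= x l ->; by rewrite size_iota.
have hh := @harm K K K1.
have Kp : 0 < INR K by apply: lt_0_INR; lia.
have lK : ln (INR K) <= ln Rr by apply: ln_le'.
have lK0 : 0 <= ln (INR K).
  rewrite -ln_1; apply: ln_le'; first lra.
  by have := INR_leq 1 K K1; rewrite /=.
have sT2 : INR (size T) <= D * (Rr * (1 + ln Rr)).
  rewrite sT INR_muln.
  have a1 : INR (Dk - 2) <= D by apply: Rle_trans HD1; apply: INR_leq; apply: leq_subr.
  have a2 : INR K * (1 + ln (INR K)) <= Rr * (1 + ln Rr).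
    apply: Rmult_le_compat; lra.
  apply: Rmult_le_compat; try lra; try apply: pos_INR.
have e : 3 * (D ^ 2 * Rr * ln Rr ^ 2 / ln D) = (D * (Rr * (3 * ln Rr))) * c.
  rewrite /c; field; lra.
rewrite e.
apply: Rle_trans s1 _; apply: Rle_trans s2 _.
apply: Rmult_le_compat_r => //.
apply: Rle_trans sT2 _.
apply: Rmult_le_compat_l; first lra.
apply: Rmult_le_compat_l; lra.
Qed.
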